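(* Let $N \ge 1$ and let $W_N$ be the set of binary words of length $N$. Define $\varphi_1 : W_N \to W_N$ by $\varphi_1(u) = 1^p v 0$ if $u = v 0 1^p$ for some (possibly empty) word $v$ and some $p \geq 1$, and $\varphi_1(u) = u$ otherwise. Then $|P(\varphi_1(u))| = |P(u)|$ for every $u \in W_N$.
   Context: For a binary word $x$, $x^j$ denotes $j$ concatenated copies of $x$, and juxtaposition denotes concatenation. For a binary word $w = w_1 \cdots w_\ell$ of length $\ell$, $P(w)$ is the set of indices $i \geq 2$ such that at least one of the following holds: (i) $\ell \geq i$ and $w_{i-1} w_i = 00$; (ii) $\ell \geq i+2$ and $w_{i-1} w_i w_{i+1} w_{i+2} = 0100$; (iii) $\ell \geq i+3$ and $w_{i-1} \cdots w_{i+3} = 01010$. *)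

(* Defs.v *)
From mathcomp Require Import all_boot.
Set Implicit Arguments. Unset Strict Implicit. Unset Printing Implicit Defensive.

(* Binary words: seq bool, with letter 0 = false and letter 1 = true. *)
Definition word := seq bool.

(* 1-indexed letter access: letter w j = w_j (meaningful for 1 <= j <= size w). *)
Definition letter (w : word) (j : nat) : bool := nth false w j.-1.

Definition inP (w : word) (i : nat) : bool :=
  let l := size w in
  (2 <= i) &&
  [|| (i <= l) && ~~ letter w i.-1 && ~~ letter w i
    , (i + 2 <= l) && ~~ letter w i.-1 && letter w i
        && ~~ letter w (i + 1) && ~~ letter w (i + 2)
    | (i + 3 <= l) && ~~ letter w i.-1 && letter w i
        && ~~ letter w (i + 1) && letter w (i + 2) && ~~ letter w (i + 3) ].

(* P(w) as the (duplicate-free, increasing) list of its elements.  Every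
   condition forces i <= size w, so ranging over 0..size w loses nothing. *)
Definition P (w : word) : seq nat := [seq i <- iota 0 (size w).+1 | inP w i].

(* phi_1: if u = v 0 1^p with p >= 1, return 1^p v 0; otherwise u.
   p is the number of trailing 1s of u; such a decomposition exists iff
   1 <= p < size u, and then v = the first (size u - p - 1) letters. *)
Definition trailing_ones (u : word) : nat := find negb (rev u).

Definition phi1 (u : word) : word :=
  let p := trailing_ones u in
  if (1 <= p) && (p < size u)
  then nseq p true ++ take (size u - p - 1) u ++ [:: false]
  else u.

(* Main.v *)
Require Import Defs.
From mathcomp Require Import all_boot zify.

Definition pat (s : word) : bool :=
 match s with
 | false :: false :: _ => true
 | false :: true :: false :: false :: _ => true
 | false :: true :: false :: true :: false :: _ => true
 | _ => false end.

Lemma inP_pat w k : inP w (k.+2) = pat (drop k w).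
Proof.
rewrite /inP /letter.
have E j : nth false w (k + j) = nth false (drop k w) j by rewrite nth_drop.
have S j : 0 < j -> (k + j <= size w) = (j <= size (drop k w)).
  by move=> ?; rewrite size_drop; apply/idP/idP; lia.
rewrite (_ : (k.+2).-1.-1 = k + 0) ?E; last by lia.
rewrite (_ : (k.+2).-1 = k + 1) ?E; last by lia.
rewrite (_ : (k.+2 + 1).-1 = k + 2) ?E; last by lia.
rewrite (_ : (k.+2 + 2).-1 = k + 3) ?E; last by lia.
rewrite (_ : (k.+2 + 3).-1 = k + 4) ?E; last by lia.
rewrite (_ : k.+2 = k + 2) ?S //; last by lia.
rewrite (_ : k + 2 + 2 = k + 4) ?S //; last by lia.
rewrite (_ : k + 2 + 3 = k + 5) ?S //; last by lia.
rewrite (_ : 1 < k + 2) ?andTb; last by lia.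
case: (drop k w) => [|x0 [|x1 [|x2 [|x3 [|x4 s]]]]] /=;
  by repeat match goal with x : bool |- _ => case: x end.
Qed.

Fixpoint cnt (w : word) : nat :=
  if w is x :: s then pat (x :: s) + cnt s else 0.

Lemma cnt_count w : cnt w = count (fun k => pat (drop k w)) (iota 0 (size w)).
Proof.
elim: w => [|x s IH] //=.
by rewrite -(addn0 1) iotaDl count_map IH.
Qed.

Lemma pat_short s : size s <= 1 -> pat s = false.
Proof. by case: s => [|[] [|? ?]]. Qed.

Lemma count_inP w m : count (inP w) (iota 0 m.+2) = count (fun k => pat (drop k w)) (iota 0 m).
Proof.
rewrite (_ : iota 0 m.+2 = [:: 0; 1] ++ iota 2 m) //.
rewrite count_cat -(addn0 2) iotaDl count_map.
rewrite (_ : count (inP w) [:: 0; 1] = 0) // add0n.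
apply: eq_count => k /=; by rewrite addnC addn2 inP_pat.
Qed.

Lemma sizeP_cnt w : size (P w) = cnt w.
Proof.
rewrite /P size_filter cnt_count.
case E: (size w) => [|n]; first by rewrite /= /inP.
rewrite count_inP -addn1 iotaD count_cat /= add0n.
by rewrite pat_short ?addn0 // size_drop E; lia.
Qed.

Lemma cnt_ones p s : cnt (nseq p true ++ s) = cnt s.
Proof. by elim: p => //= p ->. Qed.

Lemma pat_app_ones s p : pat ((s ++ [:: false]) ++ nseq p true) = pat (s ++ [:: false]).
Proof.
case: s => [|x0 [|x1 [|x2 [|x3 [|y s]]]]] /=;
  (do 4 try case: p => [|p]) => /=;
  by repeat match goal with x : bool |- _ => case: x end.
Qed.

Lemma cnt_app_ones a p : cnt ((a ++ [:: false]) ++ nseq p true) = cnt (a ++ [:: false]).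
Proof.
elim: a => [|x a IH].
  have := pat_app_ones [::] p => /= ->.
  by rewrite -(cats0 (nseq p true)) cnt_ones.
have := pat_app_ones (x :: a) p => /= ->. by rewrite IH.
Qed.

Lemma phi1_decomp u : let p := trailing_ones u in (1 <= p) && (p < size u) ->
  u = (take (size u - p - 1) u ++ [:: false]) ++ nseq p true.
Proof.
move=> p /andP [H1 H2].
have Hs : size (rev u) = size u by rewrite size_rev.
have Hhas : has negb (rev u) by rewrite has_find Hs.
have Hnth : nth true (rev u) p = false.
  by move: (nth_find true Hhas); rewrite -/p; case: (nth _ _ _).
have Htake : take p (rev u) = nseq p true.
  apply: (@eq_from_nth _ false); first by rewrite size_take size_nseq Hs H2.
  move=> i; rewrite size_take Hs H2 => Hi.
  rewrite nth_take // nth_nseq Hi.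
  have := before_find false Hi; rewrite -/p.
  by case: (nth _ _ _).
have Hdrop : drop p (rev u) = false :: drop p.+1 (rev u).
  rewrite (drop_nth true) ?Hs // Hnth.
  by congr (_ :: _).
have Hr : rev u = nseq p true ++ false :: drop p.+1 (rev u).
  by rewrite -Htake -Hdrop cat_take_drop.
set v := rev (drop p.+1 (rev u)).
have Hu : u = (v ++ [:: false]) ++ nseq p true.
  rewrite -[u]revK Hr rev_cat rev_cons -cats1 /v.
  by rewrite (_ : rev (nseq p true) = nseq p true) // rev_nseq.
have Hv : size v = size u - p - 1.
  by rewrite /v size_rev size_drop Hs; lia.
have -> : take (size u - p - 1) u = v by rewrite -Hv [X in take _ X]Hu -catA take_size_cat.
exact: Hu.
Qed.

Theorem lemma4p1 (N : nat) (hN : 1 <= N) (u : word) (hu : size u = N) :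
  size (P (phi1 u)) = size (P u).
Proof.
rewrite !sizeP_cnt /phi1.
case H: ((1 <= trailing_ones u) && (trailing_ones u < size u)) => //.
rewrite [in RHS](@phi1_decomp u H) cnt_app_ones.
by rewrite cnt_ones.
Qed.
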